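(* Let $L_I$ and $L_U$ be finite disjoint alphabets, $L=L_I\cup L_U$, let $\mathcal{S}$ be a deterministic IOLTS in $\mathcal{IO}(L_I,L_U)$, and let $m\ge 1$ be an integer. Then there exists a fault model $\mathcal{M}$ (a finite set of test purposes over $L$) that is $m$-ioco-complete for $\mathcal{S}$ relative to $\mathcal{IO}(L_I,L_U)[m]$; that is, for every implementation $\mathcal{I}\in\mathcal{IO}(L_I,L_U)[m]$ we have $\mathcal{I}\ \mathbf{ioco}\ \mathcal{S}$ if and only if $\mathcal{I}$ passes every test purpose in $\mathcal{M}$. Moreover, every test purpose in $\mathcal{M}$ can be taken to be deterministic, output-deterministic, input-enabled, and acyclic except for self-loops at its $\mathit{pass}$ and $\mathit{fail}$ states.
   Context: An IOLTS is a tuple $(S,s_0,L_I,L_U,T)$ with $S$ a set of states, $s_0\in S$ the initial state, $L_I$ (inputs) and $L_U$ (outputs) disjoint finite alphabets, $L=L_I\cup L_U$, and $T\subseteq S\times(L\cup\{\tau\})\times S$ a finite transition set, where $\tau\notin L$ is an internal (unobservable) action. $\mathcal{IO}(L_I,L_U)$ denotes the class of all IOLTSs with input alphabet $L_I$ and output alphabet $L_U$, and $\mathcal{IO}(L_I,L_U)[m]$ the subclass of those with at most $m$ states. An IOLTS is deterministic if it has no $\tau$-transitions and at most one transition from each state with each label. A state $s$ is quiescent if no transition labeled by an output in $L_U$ or by $\tau$ leaves $s$; for each quiescent state a self-loop $(s,\delta,s)$ is added, with $\delta$ a fresh symbol. For a word $\sigma=l_1\cdots l_n$ of observable labels, $s\xRightarrow{\sigma}s'$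 means there is a sequence of transitions from $s$ to $s'$ whose label sequence, after deleting all $\tau$'s, is $\sigma$. The observable traces are $otr(s)=\{\sigma\mid \exists s',\ s\xRightarrow{\sigma}s'\}$ and $otr(\mathcal{S})=otr(s_0)$. For a set or state $s$, $s\ \mathit{after}\ \sigma=\{q\mid s\xRightarrow{\sigma}q\}$, and for a set of states $P$, $out(P)=\{x\in L_U\cup\{\delta\}\mid \exists q\in P,\ q\xRightarrow{x}\}$. For an implementation $\mathcal{I}=(Q,q_0,L_I,L_U,R)$ and specification $\mathcal{S}=(S,s_0,L_I,L_U,T)$: $\mathcal{I}\ \mathbf{ioco}\ \mathcal{S}$ iff $out(q_0\ \mathit{after}\ \sigma)\subseteq out(s_0\ \mathit{after}\ \sigma)$ for all $\sigma\in otr(\mathcal{S})$. A test purpose (TP) over $L$ is an IOLTS $\mathcal{T}\in\mathcal{IO}(L_U,L_I)$ (its inputs are the implementation's outputs and its outputs are the implementation's inputs) having two special states $\mathit{pass}$ and $\mathit{fail}$, such that for no word $\sigma$ do we have $\mathit{fail}\xRightarrow{\sigma}\mathit{pass}$ or $\mathit{pass}\xRightarrow{\sigma}\mathit{fail}$. A fault model over $L$ is a finite set of TPs over $L$. A TP is output-deterministic if at every state exactly one of its output labels (elements of $L_I$) is defined, and input-enabled if at every state every one of its input labels (every element of $L_U$) is defined. For an implementation $\mathcal{I}=(Q,q_0,L_I,L_U,R)$ and a TP $\mathcal{T}$ with initial state $t_0$, the synchronous product $\mathcal{I}\times\mathcal{T}$ has states $(t,q)$, initial state $(t_0,q_0)$,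 a transition $(t,q)\xrightarrow{l}(t',q')$ for $l\in L$ whenever $t\xrightarrow{l}t'$ in $\mathcal{T}$ and $q\xrightarrow{l}q'$ in $\mathcal{I}$, and $\tau$-moves of either component taken individually. $\mathcal{I}$ passes $\mathcal{T}$ if there is no word $\sigma$ over $L$ and no state $q$ of $\mathcal{I}$ with $(t_0,q_0)\xRightarrow{\sigma}(\mathit{fail},q)$ in $\mathcal{I}\times\mathcal{T}$; $\mathcal{I}$ passes a fault model $\mathcal{M}$ if it passes every TP in $\mathcal{M}$. *)

(* Defs.v *)
From mathcomp Require Import all_boot.
From Stdlib Require List.

Set Implicit Arguments.
Unset Strict Implicit.
Unset Printing Implicit Defensive.

Section IOLTS.

(* Input alphabet L_I and output alphabet L_U; disjointness is built in
   by using the sum type LI + LU for L = L_I u L_U. *)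
Variables LI LU : finType.

(* An IOLTS in IO(L_I, L_U): a finite state set, an initial state and a
   (necessarily finite) transition relation labelled by L u {tau};
   [None] is tau, [Some (inl i)] an input, [Some (inr o)] an output. *)
Record iolts := IOLTS {
  st : finType;
  init : st;
  trans : st -> option (LI + LU) -> st -> bool
}.

Definition deterministic (S : iolts) : Prop :=
  (forall s s' : st S, ~~ trans s None s') /\
  (forall (s : st S) a s1 s2, trans s (Some a) s1 -> trans s (Some a) s2 -> s1 = s2).

Definition at_most_states (m : nat) (S : iolts) : Prop := #|st S| <= m.

Definition quiescent (S : iolts) (s : st S) : Prop :=
  forall (a : option (LI + LU)) s',
    (a = None \/ exists o, a = Some (inr o)) -> ~~ trans s a s'.

Inductive lab := LIn of LI | LOut of LU | LDelta.

Definition is_output_lab (x : lab) : Prop :=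
  match x with LIn _ => False | _ => True end.

(* Observable one-step transitions of the suspension IOLTS (a delta
   self-loop is added at every quiescent state). *)
Definition sstep (S : iolts) (s : st S) (l : lab) (s' : st S) : Prop :=
  match l with
  | LIn i => trans s (Some (inl i)) s'
  | LOut o => trans s (Some (inr o)) s'
  | LDelta => quiescent s /\ s' = s
  end.

Inductive wstep (S : iolts) : st S -> seq lab -> st S -> Prop :=
| wstep_nil s : wstep s [::] s
| wstep_tau s s1 sg s' : trans s None s1 -> wstep s1 sg s' -> wstep s sg s'
| wstep_obs s l s1 sg s' :
    sstep s l s1 -> wstep s1 sg s' -> wstep s (l :: sg) s'.

Definition otr (S : iolts) (sg : seq lab) : Prop := exists s', wstep (init S) sg s'.

Definition out_after (S : iolts) (sg : seq lab) (x : lab) : Prop :=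
  is_output_lab x /\
  exists q, wstep (init S) sg q /\ exists q', wstep q [:: x] q'.

Definition ioco (I S : iolts) : Prop :=
  forall sg, otr S sg -> forall x, out_after I sg x -> out_after S sg x.

(* Test purposes: IOLTSs with inputs L_U u {delta} and outputs L_I, i.e.
   transitions labelled by [lab] or tau ([None]), with states pass, fail. *)
Record tp := TP {
  tst : finType;
  tinit : tst;
  ttrans : tst -> option lab -> tst -> bool;
  tpass : tst;
  tfail : tst
}.

Inductive twstep (T : tp) : tst T -> seq lab -> tst T -> Prop :=
| twstep_nil t : twstep t [::] t
| twstep_tau t t1 sg t' : ttrans t None t1 -> twstep t1 sg t' -> twstep t sg t'
| twstep_obs t l t1 sg t' :
    ttrans t (Some l) t1 -> twstep t1 sg t' -> twstep t (l :: sg) t'.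

Definition is_tp (T : tp) : Prop :=
  forall sg, ~ twstep (tfail T) sg (tpass T) /\ ~ twstep (tpass T) sg (tfail T).

Inductive pwstep (I : iolts) (T : tp) :
  tst T * st I -> seq lab -> tst T * st I -> Prop :=
| pw_nil p : pwstep p [::] p
| pw_tauT t t1 q sg p' :
    ttrans t None t1 -> pwstep (t1, q) sg p' -> pwstep (t, q) sg p'
| pw_tauI t q q1 sg p' :
    trans q None q1 -> pwstep (t, q1) sg p' -> pwstep (t, q) sg p'
| pw_sync t t1 q q1 l sg p' :
    ttrans t (Some l) t1 -> sstep q l q1 -> pwstep (t1, q1) sg p' ->
    pwstep (t, q) (l :: sg) p'.

Definition passes (I : iolts) (T : tp) : Prop :=
  ~ exists sg q, pwstep (tinit T, init I) sg (tfail T, q).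

Definition fault_model := seq tp.

Definition passes_fm (I : iolts) (M : fault_model) : Prop :=
  forall T, List.In T M -> passes I T.

Definition m_ioco_complete (m : nat) (S : iolts) (M : fault_model) : Prop :=
  forall I : iolts, at_most_states m I -> (ioco I S <-> passes_fm I M).

Definition tp_deterministic (T : tp) : Prop :=
  (forall t t' : tst T, ~~ ttrans t None t') /\
  (forall (t : tst T) l t1 t2, ttrans t (Some l) t1 -> ttrans t (Some l) t2 -> t1 = t2).

Definition tp_output_deterministic (T : tp) : Prop :=
  forall t : tst T, exists i, (exists t', ttrans t (Some (LIn i)) t') /\
    forall j, (exists t', ttrans t (Some (LIn j)) t') -> j = i.

Definition tp_input_enabled (T : tp) : Prop :=
  forall t : tst T, (forall o, exists t', ttrans t (Some (LOut o)) t') /\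
            (exists t', ttrans t (Some LDelta) t').

Definition tp_edge (T : tp) (t t' : tst T) : Prop :=
  t <> t' /\ exists a, ttrans t a t'.

Inductive tp_path (T : tp) : tst T -> tst T -> Prop :=
| tp_path1 t t' : tp_edge t t' -> tp_path t t'
| tp_pathS t t1 t' : tp_edge t t1 -> tp_path t1 t' -> tp_path t t'.

Definition tp_acyclic_but_pass_fail (T : tp) : Prop :=
  (forall t : tst T, ~ tp_path t t) /\
  (forall (t : tst T) a, ttrans t a t -> t = tpass T \/ t = tfail T).

End IOLTS.

(* Main.v *)
Require Import Defs.
From Stdlib Require List.
From Stdlib Require Import ClassicalDescription Classical.
From mathcomp Require Import all_boot.
From mathcomp Require Import zify.

Set Implicit Arguments.
Unset Strict Implicit.
Unset Printing Implicit Defensive.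

Definition pb (P : Prop) : bool := if excluded_middle_informative P then true else false.
Lemma pbP (P : Prop) : pb P <-> P.
Proof. rewrite /pb; case: excluded_middle_informative => //. Qed.

Section Gen.
Variables LI LU : finType.
Implicit Types X : iolts LI LU.

Lemma wstep_cat X (q r q' : st X) u v :
  wstep q u r -> wstep r v q' -> wstep q (u ++ v) q'.
Proof.
elim=> [s|s s1 sg s' H _ IH|s l s1 sg s' H _ IH] Hv //.
- exact: wstep_tau H (IH Hv).
- exact: wstep_obs H (IH Hv).
Qed.

Lemma wstep_split X (q q' : st X) w :
  wstep q w q' -> forall u v, w = u ++ v -> exists r, wstep q u r /\ wstep r v q'.
Proof.
elim=> [s|s s1 sg s' H _ IH|s l s1 sg s' H Hw IH] u v E.
- case: u E => [|? ?] //; case: v => [|? ?] // _; exists s; split; constructor.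
- have [r [H1 H2]] := IH u v E; exists r; split=> //; exact: wstep_tau H H1.
- case: u E => [|a u] /= E.
  + exists s; split; first constructor. rewrite -E; exact: wstep_obs H Hw.
  + case: E => Ea E; subst a; have [r [H1 H2]] := IH u v E; exists r; split=> //.
    exact: wstep_obs H H1.
Qed.

Definition Req X u1 u2 := forall q, wstep (init X) u1 q <-> wstep (init X) u2 q.

Lemma Req_cat X u1 u2 v : Req X u1 u2 -> Req X (u1 ++ v) (u2 ++ v).
Proof.
move=> R q; split=> H; have [r [H1 H2]] := wstep_split H (erefl _);
  apply: wstep_cat _ H2; by apply/R.
Qed.

Definition reachf X sg : {ffun st X -> bool} := [ffun q => pb (wstep (init X) sg q)].

Lemma reachf_Req X u1 u2 : reachf X u1 = reachf X u2 -> Req X u1 u2.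
Proof.
move=> E q; have := congr1 (fun f : {ffun st X -> bool} => f q) E; rewrite !ffunE => E'.
split=> H; apply/pbP; [rewrite -E'|rewrite E']; exact/pbP.
Qed.

Lemma card_reach X : #|{ffun st X -> bool}| = 2 ^ #|st X|.
Proof. by rewrite card_ffun card_bool. Qed.

Lemma short_witness (I S : iolts LI LU) (P : seq (lab LI LU) -> Prop) :
  (forall u1 u2 v, Req I u1 u2 -> Req S u1 u2 -> P (u1 ++ v) -> P (u2 ++ v)) ->
  forall n sg, size sg <= n -> P sg ->
  exists sg', P sg' /\ size sg' < 2 ^ #|st I| * 2 ^ #|st S|.
Proof.
move=> HP; elim=> [|n IHn] sg Hs HPs.
  exists sg; split=> //; rewrite (_ : size sg = 0); [|lia].
  by rewrite muln_gt0 !expn_gt0.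
case: (ltnP (size sg) (2 ^ #|st I| * 2 ^ #|st S|)) => Hk; first by exists sg.
pose f := fun j : 'I_(size sg).+1 => (reachf I (take j sg), reachf S (take j sg)).
have : ~~ injectiveb f.
  apply/negP=> /injectiveP Hi; have := leq_card f Hi.
  by rewrite card_ord card_prod !card_reach; lia.
case/injectivePn=> j1 [j2 Hne Hf].
have key : forall a b : 'I_(size sg).+1, a < b -> f a = f b -> exists sg', P sg' /\ size sg' < 2 ^ #|st I| * 2 ^ #|st S|.
  move=> a b Hab Hfab; case: Hfab => E1 E2.
  apply: (IHn (take a sg ++ drop b sg)).
    rewrite size_cat size_take size_drop.
    have := ltn_ord b; have := ltn_ord a; case: ifP; lia.
  apply: (HP (take b sg)); [exact: reachf_Req|exact: reachf_Req|by rewrite cat_take_drop].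
case: (ltngtP j1 j2) => H.
- exact: key H Hf.
- exact: key H (esym Hf).
- by move/val_inj: H Hne => ->; rewrite eqxx.
Qed.

End Gen.

Section TPc.
Variables LI LU : finType.
Variable i0 : LI.

Definition lab_eq (a b : lab LI LU) : bool :=
  match a, b with
  | LIn i, LIn j => i == j
  | LOut o, LOut p => o == p
  | LDelta, LDelta => true
  | _, _ => false
  end.

Lemma lab_eqP a b : reflect (a = b) (lab_eq a b).
Proof.
case: a; case: b => * /=; try (by constructor);
  apply: (iffP eqP) => [->|[]] //.
Qed.

Definition allowed (i : LI) (l : lab LI LU) : bool :=
  match l with LIn k => k == i | _ => true end.

Variables (w : seq (lab LI LU)) (x : lab LI LU).

Definition stT := ('I_(size w).+1 + bool)%type.

Definition desig (j : nat) : LI :=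
  match nth (@LDelta LI LU) w j with LIn i => i | _ => i0 end.

Definition ttr (t : stT) (a : option (lab LI LU)) (t' : stT) : bool :=
  match a with
  | None => false
  | Some l =>
    match t with
    | inr b => allowed i0 l && (t' == inr b)
    | inl j =>
      if j < size w then
        (if lab_eq l (nth (@LDelta LI LU) w j) then t' == inl (inord j.+1)
         else allowed (desig j) l && (t' == inr true))
      else (if lab_eq l x then t' == inr false
            else allowed i0 l && (t' == inr true))
    end
  end.

Definition mkT : tp LI LU := @TP LI LU stT (inl ord0) ttr (inr true) (inr false).


Lemma mkT_tp : is_tp mkT.
Proof.
have H : forall b sg t', twstep (T:=mkT) (inr b) sg t' -> t' = inr b.
  move=> b sg t' H; remember (inr b : tst mkT) as t0 eqn:E.
  elim: H E => [t|t t1 sg' t'' Htr _ IH|t l t1 sg' t'' Htr _ IH] E; subst => //.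
  by move: Htr => /= /andP[_ /eqP E1]; rewrite (IH E1) E1.
by move=> sg; split=> /H.
Qed.

Lemma mkT_det : tp_deterministic mkT.
Proof.
split=> [t t'|t l t1 t2] //=.
case: t => [j|b] /=.
- case: ifP => _; case: ifP => _;
    by [move=> /eqP -> /eqP -> | move=> /andP[_ /eqP ->] /andP[_ /eqP ->]].
- by move=> /andP[_ /eqP ->] /andP[_ /eqP ->].
Qed.

Hypothesis Hx : is_output_lab x.

Lemma mkT_odet : tp_output_deterministic mkT.
Proof.
move=> [j|b] /=.
- case: (ltnP j (size w)) => Hj.
  + exists (desig j); split.
    * rewrite /desig; case E: (nth _ w j) => [i|o|].
      - by exists (inl (inord j.+1)); rewrite !eqxx.
      - by exists (inr true); rewrite !eqxx.
      - by exists (inr true); rewrite !eqxx.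
    * move=> k [t']; rewrite /desig; case: (nth _ w j) => [i|o|] //=;
        last (by move=> /andP[/eqP ->]); last (by move=> /andP[/eqP ->]).
      by case: ifP => [/eqP -> //|_ /andP[/eqP ->]].
  + exists i0; split.
    * exists (inr true).
      case: ifP => [|_]; last by rewrite !eqxx.
      by case: x Hx.
    * move=> k [t']; case: ifP => [|_].
        by case: x Hx.
      by move=> /andP[/eqP ->].
- exists i0; split; first by exists (inr b); rewrite /= !eqxx.
  by move=> k [t' /= /andP[/eqP ->]].
Qed.

Lemma mkT_enabled_out (l : lab LI LU) : (forall i : LI, l <> @LIn LI LU i) ->
  forall t : tst mkT, exists t', ttrans t (Some l) t'.
Proof.
have Ha : forall i : LI, (forall k : LI, l <> @LIn LI LU k) -> allowed i l by case: l => // k i /(_ k).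
move=> Hl [j|b] /=.
- case: (j < size w); [case: (lab_eq l _)|case: (lab_eq l x)].
  + by exists (inl (inord j.+1)).
  + by exists (inr true); rewrite Ha // eqxx.
  + by exists (inr false).
  + by exists (inr true); rewrite Ha // eqxx.
- by exists (inr b); rewrite Ha // eqxx.
Qed.

Lemma mkT_ie : tp_input_enabled mkT.
Proof. by move=> t; split=> [o|]; apply: mkT_enabled_out. Qed.

Definition rk (t : tst mkT) : nat := match t with inl j => j | inr _ => (size w).+1 end.

Lemma edge_rk (t t' : tst mkT) : tp_edge t t' -> rk t < rk t'.
Proof.
case=> Hne [[l|] //]; case: t Hne => [j|b] /= Hne.
- case: ifP => Hj; case: ifP => _.
  + by move/eqP => ->; rewrite /= inordK.
  + by case/andP=> _ /eqP ->.
  + by move/eqP => ->; have := ltn_ord j.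
  + by case/andP=> _ /eqP ->; have := ltn_ord j.
- by case/andP=> _ /eqP E; rewrite E in Hne.
Qed.

Lemma mkT_acyc : tp_acyclic_but_pass_fail mkT.
Proof.
split.
- have H : forall t t', tp_path t t' -> rk t < rk t'.
    move=> t t'; elim=> [a b /edge_rk //|a b c /edge_rk H1 _ H2]; exact: ltn_trans H1 H2.
  by move=> t /H; rewrite ltnn.
- move=> t a; case: t => [j|[]]; case: a => [l|] //=; try by [left|right].
  case Hj: (j < size w); [case: (lab_eq l _)|case: (lab_eq l x)] => //; try by case/andP.
  by move/eqP => [] /(congr1 val); rewrite /= inordK //; lia.
Qed.


Lemma lab_eq_refl l : lab_eq l l.
Proof. exact/lab_eqP. Qed.

Lemma pw_fail (I : iolts LI LU) p s p' : @pwstep LI LU I mkT p s p' -> p'.1 = inr false ->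
  match p.1 with inl j => exists r, wstep p.2 (drop j w ++ [:: x]) r | inr b => b = false end.
Proof.
elim=> [p0|t t1 q sg p1 Htr _ IH|t q q1 sg p1 Htr _ IH|t t1 q q1 l sg p1 Htr Hs _ IH] Hf.
- by case: p0 Hf => [[j|b] q] //= [].
- by [].
- case: t IH => [j|b] /= IH; last exact: IH.
  by have [r Hr] := IH Hf; exists r; exact: wstep_tau Htr Hr.
- case: t Htr => [j|b] /= Htr; last first.
    by case/andP: Htr => _ /eqP E; move: (IH Hf); rewrite E.
  move: Htr; case Hj: (j < size w).
  + case E: (lab_eq l _).
      move/eqP => E1; move: (IH Hf); rewrite E1 /= inordK // => -[r Hr].
      exists r; rewrite (drop_nth (LDelta LI LU) Hj) /=; move/lab_eqP: E => <-.
      exact: wstep_obs Hs Hr.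
    by case/andP=> _ /eqP E1; move: (IH Hf); rewrite E1.
  + rewrite drop_oversize; last by rewrite leqNgt Hj.
    case E: (lab_eq l x).
      move=> _; exists q1; move/lab_eqP: E => <-; apply: wstep_obs Hs _; constructor.
    by case/andP=> _ /eqP E1; move: (IH Hf); rewrite E1.
Qed.

Lemma tau_pw (I : iolts LI LU) (q r : st I) : wstep q [::] r ->
  forall t, @pwstep LI LU I mkT (t, q) [::] (t, r).
Proof.
move=> H; remember [::] as e eqn:Ee; elim: H Ee => // [s|s s1 sg s' Htr _ IH] Ee t.
- constructor.
- apply: pw_tauI Htr _; exact: IH.
Qed.

Lemma wstep_pw (I : iolts LI LU) (q r : st I) s : wstep q s r ->
  forall j : 'I_(size w).+1, s = drop j w ++ [:: x] ->
  @pwstep LI LU I mkT (inl j, q) s (inr false, r).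
Proof.
elim=> [s0|s0 s1 sg s' Htr _ IH|s0 l s1 sg s' Hs Hw IH] j E.
- by case: (drop j w) E.
- apply: pw_tauI Htr _; exact: IH.
- case Hj: (j < size w).
  + move: E; rewrite (drop_nth (LDelta LI LU) Hj) /= => -[El Esg].
    apply: (@pw_sync _ _ I mkT _ (inl (inord j.+1))) Hs _.
      by rewrite /= Hj El lab_eq_refl eqxx.
    by apply: IH; rewrite inordK.
  + move: E; rewrite drop_oversize /=; last by rewrite leqNgt Hj.
    case=> El Esg; subst.
    apply: (@pw_sync _ _ I mkT _ (inr false)) Hs _.
      by rewrite /= Hj lab_eq_refl eqxx.
    exact: tau_pw.
Qed.

Lemma mkT_fails (I : iolts LI LU) :
  ~ passes I mkT <-> exists r, wstep (init I) (w ++ [:: x]) r.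
Proof.
rewrite /passes; split.
- move=> H; apply: NNPP => H'; apply: H => -[sg [q Hp]].
  by have := pw_fail Hp (erefl _); rewrite /= drop0.
- move=> [r Hr] H; apply: H; exists (w ++ [:: x]), r.
  by apply: (wstep_pw Hr); rewrite /= drop0.
Qed.

End TPc.

Section Enum.
Variables LI LU : finType.

Lemma in_seqIn (T : eqType) (a : T) s : a \in s -> List.In a s.
Proof. elim: s => //= b s IH; rewrite in_cons => /orP[/eqP ->|/IH]; auto. Qed.

Definition labs : list (lab LI LU) :=
  List.map (@LIn LI LU) (enum LI) ++ List.map (@LOut LI LU) (enum LU) ++ [:: @LDelta LI LU].

Lemma labs_all l : List.In l labs.
Proof.
rewrite /labs; case: l => [i|o|]; apply/List.in_or_app.
- left; apply/List.in_map/in_seqIn; by rewrite mem_enum.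
- right; apply/List.in_or_app; left; apply/List.in_map/in_seqIn; by rewrite mem_enum.
- right; apply/List.in_or_app; right; by left.
Qed.

Fixpoint words (n : nat) : list (seq (lab LI LU)) :=
  match n with
  | 0 => [:: [::]]
  | n.+1 => [::] :: List.flat_map (fun l => List.map (cons l) (words n)) labs
  end.

Lemma words_all n w : size w <= n -> List.In w (words n).
Proof.
elim: n w => [|n IH] [|l w] //= Hs; [by left|by left|].
right; apply/List.in_flat_map; exists l; split; first exact: labs_all.
by apply/List.in_map/IH.
Qed.

End Enum.

Lemma exists_filter (A B : Type) (f : A -> B) (P : A -> Prop) (l : list A) :
  exists M, forall b, List.In b M <-> exists a, List.In a l /\ P a /\ b = f a.
Proof.
elim: l => [|a l [M HM]].
  by exists [::] => b; split => // -[a [[]]].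
case: (classic (P a)) => Ha.
- exists (f a :: M) => b /=; split.
    case=> [<-|Hb]; first by exists a; split; [left|].
    have [a' [H1 H2]] := (proj1 (HM b)) Hb; exists a'; split=> //; by right.
  case=> a' [[->|H1] [H2 ->]]; first by left.
  by right; apply: (proj2 (HM _)); exists a'.
- exists M => b; split.
    move=> Hb; have [a' [H1 H2]] := (proj1 (HM b)) Hb; exists a'; split=> //; by right.
  case=> a' [[E|H1] [H2 H3]]; first by subst.
  by apply: (proj2 (HM _)); exists a'.
Qed.

Theorem mainTheorem1 (LI LU : finType) (neI : 0 < #|LI|) (neU : 0 < #|LU|)
    (S : iolts LI LU) (m : nat) :
  deterministic S -> 1 <= m ->
  exists M : fault_model LI LU,
    (forall T, List.In T M -> is_tp T) /\
    m_ioco_complete m S M /\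
    (forall T, List.In T M ->
       [/\ tp_deterministic T, tp_output_deterministic T,
           tp_input_enabled T & tp_acyclic_but_pass_fail T]).
Proof.
move=> _ _; case/card_gt0P: neI => i0 _.
pose N := 2 ^ m * 2 ^ #|st S|.
pose C := List.flat_map (fun w => List.map (fun x => (w, x)) (labs LI LU)) (words LI LU N).
pose P := fun c : seq (lab LI LU) * lab LI LU =>
  otr S c.1 /\ is_output_lab c.2 /\ ~ out_after S c.1 c.2.
have [M HM] := exists_filter (fun c => mkT i0 c.1 c.2) P C.
exists M; split; last split.
- by move=> T /HM [c [_ [_ ->]]]; apply: mkT_tp.
- move=> I HI; split.
  + move=> Hioco T /HM [[w x] [_ [[Ho [Hx Hn]] ->]]] /=.
    simpl in Ho, Hx, Hn; apply: NNPP => Hnp; have [r Hr] := proj1 (mkT_fails i0 w x I) Hnp.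
    have [q [Hq Hr']] := wstep_split Hr (erefl _).
    apply: Hn; apply: Hioco => //; split=> //; exists q; split=> //; by exists r.
  + move=> Hp sg Hotr x Hout; apply: NNPP => Hn.
    pose P' := fun sg => otr S sg /\ out_after I sg x /\ ~ out_after S sg x.
    have HP : forall u1 u2 v, Req I u1 u2 -> Req S u1 u2 -> P' (u1 ++ v) -> P' (u2 ++ v).
      move=> u1 u2 v RI RS; have RI' := Req_cat v RI; have RS' := Req_cat v RS.
      move=> [[q Hq] [[Hx [q1 [Hq1 Hq1']]] Hn']]; split; last split.
      * by exists q; apply/RS'.
      * by split=> //; exists q1; split=> //; apply/RI'.
      * move=> [_ [q2 [Hq2 Hq2']]]; apply: Hn'; split=> //; exists q2; split=> //.
        by apply/RS'.
    have [sg' [[Ho' [Hout' Hn']] Hs']] := short_witness HP (leqnn (size sg)) (conj Hotr (conj Hout Hn)).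
    have HT : List.In (mkT i0 sg' x) M.
      apply/HM; exists (sg', x); split; last split=> //.
        apply/List.in_flat_map; exists sg'; split.
          apply: words_all; apply: leq_trans (ltnW Hs') _.
          by rewrite leq_mul2r leq_pexp2l // orbT.
        by apply/List.in_map/labs_all.
      by split=> //; split=> //; case: Hout'.
    apply: (proj2 (mkT_fails i0 sg' x I) _ (Hp _ HT)).
    case: Hout' => _ [q [Hq [q' Hq']]]; exists q'; exact: wstep_cat Hq Hq'.
- move=> T /HM [[w x] [_ [[_ [Hx _]] ->]]]; simpl in Hx |- *; split.
  + exact: mkT_det.
  + exact: mkT_odet.
  + exact: mkT_ie.
  + exact: mkT_acyc.
Qed.
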